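(* Let $f$ be a tolerance function with $0<f(K)<K$ satisfying $$\lim_{K\to\infty}\frac{K-f(K)}{\ln K}=0.$$ Then $p=\lim_{n\to\infty}P(\mathbf y\in L(\mathbf x))>0$ implies $P(\mathbf y\in I(\mathbf x,f))=1$. Furthermore, if $p>0.5$, it suffices that $f$ satisfies $$\lim_{K\to\infty}\frac{K}{(K-f(K))\,2^{K-f(K)}}=+\infty$$ to obtain $P(\mathbf y\in I(\mathbf x,f))=1$.
   Context: Setting: $n$ instances form the dataset $\mathcal D=\mathcal D_n$; a forest $\Theta_K$ of $K$ axis-aligned causal trees is built on $\mathcal D$, the trees independent given $\mathcal D$. $L_k(\mathbf x)$ is the leaf of tree $k$ containing $\mathbf x$, $I(\mathbf x,\theta_k)$ its box; $P(\mathbf y\in L(\mathbf x))=P(\mathbf y\in L_k(\mathbf x)\mid\mathcal D)$, same for every $k$, with the events independent across $k$. LILI with $K$ trees under tolerance function $f$: $I(\mathbf x,\Theta_K,f)=\bigcup_{s>K-f(K)}\bigcup_{1\le i_1<\cdots<i_s\le K}\bigcap_{k=1}^sI(\mathbf x,\theta_{i_k})$, i.e. $\mathbf y\in I(\mathbf x,\Theta_K,f)$ iff the number of $k$ with $\mathbf y\in L_k(\mathbf x)$ exceeds $K-f(K)$; $P(\mathbf y\in I(\mathbf x,f)):=\lim_{K\to\infty}\lim_{n\to\infty}P(\mathbf y\in I(\mathbf x,\Theta_K,f)\mid\mathcal D_n)$. *)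

(* Defs.v *)
From HB Require Import structures.
From mathcomp Require Import all_boot all_order all_algebra.
From mathcomp Require Import all_classical all_reals all_analysis.
Set Implicit Arguments. Unset Strict Implicit. Unset Printing Implicit Defensive.
Import Order.TTheory GRing.Theory Num.Theory numFieldNormedType.Exports.
Local Open Scope classical_set_scope.
Local Open Scope ring_scope.

Definition mutually_independent d (T : measurableType d) (R : realType)
  (P : probability T R) (A : nat -> set T) : Prop :=
  (forall k, measurable (A k)) /\
  (forall s : seq nat, uniq s ->
     P (\big[setI/setT]_(k <- s) A k) = (\prod_(k <- s) P (A k))%E).

(* number of trees k < K whose leaf L_k(x) contains y, at outcome w
   (A k = event "y in L_k(x)") *)
Definition nb_agree T (A : nat -> set T) (K : nat) (w : T) : nat :=
  \sum_(k < K) ((w \in A k) : nat).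

(* the event "y in I(x, Theta_K, f)" : the number of k <= K with
   y in L_k(x) exceeds K - f(K) *)
Definition LILI_event T (A : nat -> set T) (f : nat -> nat) (K : nat) : set T :=
  [set w | (K - f K < nb_agree A K w)%N].

(* Main.v *)
Require Import Defs.
From HB Require Import structures.
From mathcomp Require Import all_boot all_order all_algebra.
From mathcomp Require Import all_classical all_reals all_analysis.
From mathcomp Require Import ring lra.
Set Implicit Arguments. Unset Strict Implicit. Unset Printing Implicit Defensive.
Import Order.TTheory GRing.Theory Num.Theory numFieldNormedType.Exports.
Local Open Scope classical_set_scope.
Local Open Scope ring_scope.

Lemma in_bigsetI (I : eqType) T (r : seq I) (F : I -> set T) w :
  (\big[setI/setT]_(k <- r) F k) w <-> (forall k, k \in r -> F k w).
Proof.
elim: r => [|a r IH]; first by rewrite big_nil; split.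
rewrite big_cons; split.
  move=> [Fa /IH H] k; rewrite in_cons => /orP[/eqP->//|]; exact: H.
move=> H; split; first by apply: H; rewrite mem_head.
by apply/IH => k kr; apply: H; rewrite in_cons kr orbT.
Qed.

Lemma in_bigsetU (I : eqType) T (r : seq I) (P : pred I) (F : I -> set T) w :
  (\big[setU/set0]_(k <- r | P k) F k) w <-> (exists k, [/\ k \in r, P k & F k w]).
Proof.
elim: r => [|a r IH].
  by rewrite big_nil; split => [//|[k []]].
rewrite big_cons; case: ifPn => Pa; split.
- move=> [Fa|/IH [k [kr Pk Fk]]]; first by exists a; rewrite mem_head.
  by exists k; rewrite in_cons kr orbT.
- move=> [k [+ Pk Fk]]; rewrite in_cons => /orP[/eqP<-|kr]; first by left.
  by right; apply/IH; exists k.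
- move=> /IH [k [kr Pk Fk]]; by exists k; rewrite in_cons kr orbT.
- move=> [k [+ Pk Fk]]; rewrite in_cons => /orP[/eqP ka|kr].
    by subst k; rewrite Pk in Pa.
  by apply/IH; exists k.
Qed.

Section Prob.
Context d (T : measurableType d) (R : realType) (P : probability T R)
  (A : nat -> set T) (x : R).
Hypothesis HI : mutually_independent P A.
Hypothesis HA : forall k, P (A k) = x%:E.

Lemma indep_gen K (g : 'I_K -> bool) (r s : seq 'I_K) : uniq (s ++ r) ->
  P (\big[setI/setT]_(k <- s) A k `&`
     \big[setI/setT]_(k <- r) (if g k then A k else ~` A k)) =
  (x ^+ size s * \prod_(k <- r) (if g k then x else 1 - x))%:E.
Proof.
have mA := HI.1.
have mS (s' : seq 'I_K) : measurable (\big[setI/setT]_(k <- s') A k).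
  by apply: bigsetI_measurable.
have mR (r' : seq 'I_K) : measurable (\big[setI/setT]_(k <- r') (if g k then A k else ~` A k)).
  by apply: bigsetI_measurable => k _; case: (g k) => //; apply: measurableC.
elim: r s => [|j r IH] s.
  rewrite cats0 => us; rewrite big_nil setIT big_nil mulr1.
  have := HI.2 (map val s); rewrite map_inj_uniq; last exact: val_inj.
  move=> /(_ us); rewrite !big_map => ->.
  rewrite (eq_bigr (fun _ => x%:E)); last by move=> i _; rewrite HA.
  rewrite prodEFin; congr (_%:E); clear us.
  by elim: s => [|a s IHs]; rewrite ?big_nil ?big_cons ?IHs ?exprS.
move=> us.
have us' : uniq ((j :: s) ++ r).
  have pe : perm_eq ([:: j] ++ s ++ r) (s ++ [:: j] ++ r) by rewrite perm_catCA.
  by rewrite -cat1s -catA (perm_uniq pe).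
rewrite big_cons; case gj: (g j).
  rewrite setIA (setIC _ (A j)).
  have -> : A j `&` \big[setI/setT]_(k <- s) A k = \big[setI/setT]_(k <- j :: s) A k by rewrite big_cons.
  rewrite IH //= exprS big_cons /= gj.
  by congr (_%:E); ring.
rewrite big_cons gj.
have -> : \big[setI/setT]_(k <- s) A k `&` (~` A j `&`
    \big[setI/setT]_(k <- r) (if g k then A k else ~` A k)) =
  (\big[setI/setT]_(k <- s) A k `&`
    \big[setI/setT]_(k <- r) (if g k then A k else ~` A k)) `\` A j.
  by apply/seteqP; split => w /= => [[a [b c]]|[[a c] b]]; do ?split.
set X := (\big[setI/setT]_(k <- s) A k `&`
    \big[setI/setT]_(k <- r) (if g k then A k else ~` A k)).
have mX : measurable X by apply: measurableI.
have HD : P (X `\` A j) = (P X - P (X `&` A j))%E.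
  apply: measureD => //.
  by apply: (le_lt_trans (probability_le1 _ _)); [|rewrite ltry].
rewrite HD /X (IH s); last by move: us' => /= /andP[].
rewrite setIAC.
have -> : \big[setI/setT]_(k <- s) A k `&` A j = \big[setI/setT]_(k <- j :: s) A k by rewrite big_cons setIC.
rewrite IH //= -EFinB; congr (_%:E); rewrite exprS; ring.
Qed.

Definition Ef K (f : {ffun 'I_K -> bool}) : set T :=
  \big[setI/setT]_(k < K) (if f k then A k else ~` A k).

Lemma mEf K f : measurable (@Ef K f).
Proof.
apply: bigsetI_measurable => k _; case: (f k); first exact: HI.1.
exact/measurableC/(HI.1).
Qed.

Lemma PEf K f : P (@Ef K f) = (\prod_(k < K) (if f k then x else 1 - x))%:E.
Proof.
have := @indep_gen K f (index_enum 'I_K) [::].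
rewrite big_nil setTI /= expr0 mul1r => -> //.
exact: index_enum_uniq.
Qed.

Lemma Ef_char K f w : Ef f w <-> f = [ffun k : 'I_K => w \in A k].
Proof.
rewrite /Ef in_bigsetI; split.
  move=> H; apply/ffunP => k; rewrite ffunE.
  have := H k (mem_index_enum k); case: (f k) => Hk.
    by rewrite (mem_set Hk).
  by apply/esym/negbTE/negP => /set_mem.
move=> -> k _; rewrite ffunE; case: ifPn; first by move/set_mem.
by move=> /negP H1 H2; apply: H1; apply: mem_set.
Qed.

Lemma Pcount K m :
  P [set w | (nb_agree A K w <= m)%N] =
  (\sum_(f : {ffun 'I_K -> bool} | (\sum_(k < K) f k <= m)%N)
      \prod_(k < K) (if f k then x else 1 - x))%:E.
Proof.
have -> : [set w | (nb_agree A K w <= m)%N] =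
   \big[setU/set0]_(f : {ffun 'I_K -> bool} | (\sum_(k < K) f k <= m)%N) Ef f.
  apply/seteqP; split => w /=.
    move=> H; apply/in_bigsetU; exists [ffun k : 'I_K => w \in A k].
    split; [exact: mem_index_enum| |by apply/Ef_char].
    by under eq_bigr do rewrite ffunE.
  move=> /in_bigsetU [f [_ Hf /Ef_char Ef']]; subst f.
  by move: Hf; rewrite /nb_agree; under eq_bigr do rewrite ffunE.
rewrite -sumEFin.
under [in RHS]eq_bigr do rewrite -PEf.
rewrite (big_enum_val_cond (A := predT)) /=.
rewrite [RHS](big_enum_val_cond (A := predT)) /=.
apply: measure_bigsetU_ord_cond; first by move=> i _; apply: mEf.
move=> i j _ _ [w [/Ef_char Hi /Ef_char Hj]].
by apply: enum_val_inj; rewrite Hi Hj.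
Qed.
End Prob.
Definition hsum (R : realType) K m (x : R) :=
  \sum_(g : {ffun 'I_K -> bool} | (\sum_(k < K) g k <= m)%N)
      \prod_(k < K) (if g k then x else 1 - x).

Lemma hsum_ge0 (R : realType) K m (x : R) : 0 <= x <= 1 -> 0 <= hsum K m x.
Proof.
move=> /andP[x0 x1]; apply: sumr_ge0 => g _; apply: prodr_ge0 => k _.
by case: (g k) => //; rewrite subr_ge0.
Qed.

Lemma hsum_le (R : realType) K m (x : R) : 0 <= x <= 1 ->
  hsum K m x <= 2 ^+ m * (1 - x / 2) ^+ K.
Proof.
move=> /andP[x0 x1].
have t0 (g : {ffun 'I_K -> bool}) : 0 <= \prod_(k < K) (if g k then x / 2 else 1 - x).
  by apply: prodr_ge0 => k _; case: (g k); [apply: divr_ge0|rewrite subr_ge0].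
have E (g : {ffun 'I_K -> bool}) : \prod_(k < K) (if g k then x else 1 - x) =
   2 ^+ (\sum_(k < K) g k) * \prod_(k < K) (if g k then x / 2 else 1 - x).
  rewrite -prodrXr -big_split /=; apply: eq_bigr => k _.
  by case: (g k) => /=; rewrite ?expr1 ?expr0 ?mul1r //; field.
rewrite /hsum (eq_bigr _ (fun g _ => E g)).
apply: (@le_trans _ _ (\sum_(g : {ffun 'I_K -> bool}) 2 ^+ m * \prod_(k < K) (if g k then x / 2 else 1 - x))).
  rewrite [X in _ <= X](bigID (fun g : {ffun 'I_K -> bool} => (\sum_(k < K) g k <= m)%N)) /=.
  rewrite -[X in X <= _]addr0; apply: lerD.
    apply: ler_sum => g Hg; apply: ler_wpM2r => //.
    by apply: ler_weXn2l => //; rewrite ler1n.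
  by apply: sumr_ge0 => g _; apply: mulr_ge0 => //; apply: exprn_ge0.
rewrite -mulr_sumr; apply: ler_wpM2l; first exact: exprn_ge0.
have := bigA_distr_bigA (fun (k : 'I_K) (b : bool) => if b then x / 2 else 1 - x).
rewrite /= => <-.
under eq_bigr do rewrite big_bool /=.
rewrite prodr_const card_ord le_eqVlt; apply/orP; left; apply/eqP.
by congr (_ ^+ _); field.
Qed.

Lemma cvg_hsum (R : realType) K m (u : nat -> R) a :
  u n @[n --> \oo] --> a -> hsum K m (u n) @[n --> \oo] --> hsum K m a.
Proof.
move=> ua; rewrite /hsum.
apply: (cvg_big (op := +%R)) => //; first exact: add_continuous.
move=> g _; apply: (@cvg_big R _ *%R 1 xpredT mul_continuous nat \oo (index_enum _) (fun k n => if g k then u n else 1 - u n) (fun k => if g k then a else 1 - a)) => //.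
move=> k _; case: (g k) => //; apply: cvgB => //; exact: cvg_cst.
Qed.

Lemma Kpow (R : realType) (s : R) K : 0 <= s < 1 -> K%:R * s ^+ K <= (1 - s)^-1.
Proof.
move=> /andP[s0 s1].
have c0 : 0 < 1 - s by rewrite subr_gt0.
have hi : (1 - s)^-1 * (1 - s) = 1 by rewrite mulVf // gt_eqF.
set i := (1 - s)^-1 in hi *.
have i0 : 0 <= i by rewrite /i invr_ge0 ltW.
elim: K => [|K IH]; first by rewrite mul0r.
have sK : s ^+ K <= 1 by apply: exprn_ile1 => //; apply: ltW.
rewrite exprS -natr1.
have -> : (K%:R + 1) * (s * s ^+ K) = s * (K%:R * s ^+ K + s ^+ K) by ring.
apply: (@le_trans _ _ (s * (i + 1))).
  by apply: ler_wpM2l => //; apply: lerD.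
nra.
Qed.

Lemma hsum_cvg0 (R : realType) (x : R) (mK : nat -> nat) :
  0 < x <= 1 -> (\forall K \near \oo, (2 ^ mK K <= K)%N) ->
  hsum K (mK K) x @[K --> \oo] --> 0.
Proof.
move=> /andP[x0 x1] Hm.
pose s := 1 - x / 4.
have s0 : 0 <= s by rewrite /s; lra.
have s1 : s < 1 by rewrite /s; lra.
apply: (@squeeze_cvgr _ _ _ _ (cst 0) (fun K => (1 - s)^-1 * s ^+ K)); last 2 first.
- exact: cvg_cst.
- rewrite -(mulr0 ((1 - s)^-1)); apply: cvgM; first exact: cvg_cst.
  by apply: cvg_expr; rewrite ger0_norm.
near=> K; apply/andP; split; first by apply: hsum_ge0; rewrite ltW.
apply: (le_trans (hsum_le _ _ _)); first by rewrite ltW.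
have h2 : 2 ^+ mK K <= K%:R :> R.
  by rewrite -natrX ler_nat; near: K.
have hx : 0 <= 1 - x / 2 by lra.
have hs : 1 - x / 2 <= s ^+ 2 by rewrite /s; nra.
apply: (@le_trans _ _ (K%:R * (s ^+ 2) ^+ K)).
  apply: ler_pM => //; first exact: exprn_ge0.
  by apply: lerXn2r => //; rewrite nnegrE // exprn_ge0.
rewrite -exprM mulnC exprM expr2 mulrA.
apply: ler_wpM2r; first exact: exprn_ge0.
by apply: Kpow; rewrite s0.
Unshelve. all: end_near.
Qed.

Lemma LILI_fine d (T : measurableType d) (R : realType) (P : probability T R)
  (A : nat -> set T) (x : R) f K :
  mutually_independent P A -> (forall k, P (A k) = x%:E) ->
  fine (P (LILI_event A f K)) = 1 - hsum K (K - f K) x.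
Proof.
move=> HI HA.
have -> : LILI_event A f K = ~` [set w | (nb_agree A K w <= K - f K)%N].
  apply/seteqP; split => w; rewrite /LILI_event /= ltnNge; first by move/negP.
  by move=> H; apply/negP.
rewrite probability_setC; last first.
  rewrite (_ : [set w | _] = \big[setU/set0]_(g : {ffun 'I_K -> bool} | (\sum_(k < K) g k <= K - f K)%N) Ef A g).
    by apply: bigsetU_measurable => g _; apply: (mEf HI).
  apply/seteqP; split => w /=.
    move=> H; apply/in_bigsetU; exists [ffun k : 'I_K => w \in A k].
    split; [exact: mem_index_enum| |by apply/Ef_char].
    by under eq_bigr do rewrite ffunE.
  move=> /in_bigsetU [g [_ Hg /Ef_char Ef']]; subst g.
  by move: Hg; rewrite /nb_agree; under eq_bigr do rewrite ffunE.
by rewrite (Pcount HI HA).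
Qed.

Theorem mainTheorem14 (R : realType) (d : measure_display) (T : measurableType d)
  (P : nat -> probability T R)          (* P n = P( . | D_n) *)
  (A : nat -> nat -> set T)             (* A n k = event "y in L_k(x)" given D_n *)
  (pn : nat -> R) (p : R) (f : nat -> nat) :
  (forall n, mutually_independent (P n) (A n)) ->
  (forall n k, P n (A n k) = (pn n)%:E) ->
  pn n @[n --> \oo] --> p ->
  (forall K, (1 < K)%N -> (0 < f K < K)%N) ->
  ((0 < p ->
    (fun K : nat => ((K - f K)%:R / ln K%:R : R)) @ \oo --> (0 : R) ->
    (forall K, cvgn (fun n => fine (P n (LILI_event (A n) f K)))) /\
    (fun K => limn (fun n => fine (P n (LILI_event (A n) f K)))) @ \oo --> (1 : R))
  /\
  (1 / 2 < p ->
    (fun K : nat => (K%:R / ((K - f K)%:R * 2 ^+ (K - f K)) : R)) @ \oo --> +oo ->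
    (forall K, cvgn (fun n => fine (P n (LILI_event (A n) f K)))) /\
    (fun K => limn (fun n => fine (P n (LILI_event (A n) f K)))) @ \oo --> (1 : R))).
Proof.
move=> HI HA Hp Hf.
have pn01 n : 0 <= pn n <= 1.
  have h1 : (P n (A n 0%N) <= 1)%E by apply: probability_le1; exact: (HI n).1.
  have h0 : (0 <= P n (A n 0%N))%E by apply: measure_ge0.
  by rewrite HA lee_fin in h0 h1; apply/andP.
have p1 : p <= 1.
  apply: (@ler_cvg_to _ _ _ _ pn (cst 1) p 1 Hp (cvg_cst _)).
  by near=> n; have /andP[] := pn01 n.
have key K : (fun n => fine (P n (LILI_event (A n) f K))) =
             (fun n => 1 - hsum K (K - f K) (pn n)).
  by apply/funext => n; apply: LILI_fine.
have Hc K : (fun n => fine (P n (LILI_event (A n) f K))) @ \oo --> 1 - hsum K (K - f K) p.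
  by rewrite key; apply: cvgB; [exact: cvg_cst|exact: cvg_hsum].
have final : (\forall K \near \oo, (2 ^ (K - f K) <= K)%N) -> 0 < p ->
    (forall K, cvgn (fun n => fine (P n (LILI_event (A n) f K)))) /\
    (fun K => limn (fun n => fine (P n (LILI_event (A n) f K)))) @ \oo --> (1 : R).
  move=> H2 p0; split; first by move=> K; apply/cvg_ex; eexists; exact: Hc.
  have -> : (fun K => limn (fun n => fine (P n (LILI_event (A n) f K)))) =
            (fun K => 1 - hsum K (K - f K) p).
    by apply/funext => K; apply: cvg_lim => //; exact: Hc.
  rewrite -[X in _ --> X](subr0 1); apply: cvgB; first exact: cvg_cst.
  by apply: hsum_cvg0 => //; rewrite p0 p1.
split.
  move=> p0 Hl; apply: final => //.
  have l2 : 0 < ln (2 : R) by apply: ln_gt0; lra.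
  have i2 : 0 < (ln (2:R))^-1 by rewrite invr_gt0.
  have Hn := cvgr_lt 0 Hl _ i2.
  near=> K.
  have K1 : (1 < K)%N by near: K; exists 2%N.
  have lK : 0 < ln (K%:R : R) by apply: ln_gt0; rewrite ltr1n.
  have : (K - f K)%:R / ln K%:R < (ln (2 : R))^-1 by near: K; exact: Hn.
  rewrite ltr_pdivrMr // => H.
  have : ln ((2 : R) ^+ (K - f K)) < ln (K%:R : R).
    by rewrite lnXn // -[ln _ *+ _]mulr_natl -ltr_pdivlMr // [_ / _]mulrC.
  rewrite ltr_ln ?posrE ?exprn_gt0 ?ltr0n //; last by rewrite (ltn_trans _ K1).
  by rewrite -natrX ltr_nat => /ltnW.
move=> p0 Hl; apply: final; last by apply: lt_trans p0; lra.
move/cvgryPge : Hl => /(_ 1) Hl.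
near=> K.
have K1 : (1 < K)%N by near: K; exists 2%N.
have /andP[f0 fK] := Hf K K1.
have m0 : (0 < K - f K)%N by rewrite subn_gt0.
have : 1 <= K%:R / ((K - f K)%:R * 2 ^+ (K - f K)) :> R by near: K; exact: Hl.
have pos : 0 < (K - f K)%:R * 2 ^+ (K - f K) :> R.
  by apply: mulr_gt0; [rewrite ltr0n|apply: exprn_gt0].
rewrite ler_pdivlMr // mul1r -natrX -natrM ler_nat => H.
by apply: leq_trans H; rewrite leq_pmull.
Unshelve. all: end_near.
Qed.
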